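(* Let $p>5$ be a prime and $k$ a positive integer with $k<p/4$. Set $D=\left\lceil \frac{2kp}{p-3}\right\rceil$. Then $D<p$, and for any $D$-APs $A_1,\dots,A_k\subseteq\mathbb{Z}_p$ we have $\big|\sum_{i=1}^k A_i\big| \le \frac{p-1}{2}$.
   Context: $\mathbb{Z}_p=\{0,\dots,p-1\}$ under addition mod $p$. Sumset: $\sum_{i=1}^k A_i=\{a_1+\dots+a_k\bmod p : a_i\in A_i\}$. For an integer $1\le D\le p-1$ and $b\in\{0,\dots,D-1\}$, the $D$-AP with base $b$ is $A_{(b)}=\{b+iD : i\text{ integer},\ 0\le i\le\lfloor (p-1-b)/D\rfloor\}\subseteq\mathbb{Z}_p$; a $D$-AP is any set of this form. *)

(* Defs.v *)
(* Z_p is represented by 'I_p (residues 0..p-1), addition mod p. *)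
From mathcomp Require Import all_boot.
Set Implicit Arguments. Unset Strict Implicit. Unset Printing Implicit Defensive.

Definition ceil_div (m n : nat) : nat := (m + n - 1) %/ n.

Definition DAP (p D b : nat) : {set 'I_p} :=
  [set x : 'I_p | [exists i : 'I_p, (i <= (p - 1 - b) %/ D) && (val x == b + i * D)]].

Definition is_DAP (p D : nat) (A : {set 'I_p}) : Prop :=
  exists2 b, b < D & A = DAP p D b.

Definition sumset (p k : nat) (A : 'I_k -> {set 'I_p}) : {set 'I_p} :=
  [set x : 'I_p | [exists a : {ffun 'I_k -> 'I_p},
      [forall i, a i \in A i] && (val x == (\sum_(i < k) val (a i)) %% p)]].
Arguments is_DAP : clear implicits.
Arguments DAP : clear implicits.

(* Main.v *)
Require Import Defs.
From mathcomp Require Import all_boot.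
From mathcomp Require Import zify.

Lemma ceil_div_ge m n : 0 < n -> m <= ceil_div m n * n.
Proof.
move=> n0; rewrite /ceil_div.
have := divn_eq (m + n - 1) n; have := ltn_pmod (m + n - 1) n0.
set d := (m + n - 1) %/ n; set r := (m + n - 1) %% n. lia.
Qed.

Theorem lemma3p2 (p k : nat) :
  prime p -> 5 < p -> 0 < k -> 4 * k < p ->
  let D := ceil_div (2 * k * p) (p - 3) in
  D < p /\
  (forall A : 'I_k -> {set 'I_p}, (forall i, is_DAP p D (A i)) ->
     2 * #|sumset A| <= p - 1).
Proof.
move=> pp p5 k0 kp D.
have n0 : 0 < p - 3 by lia.
have Dge := @ceil_div_ge (2 * k * p) _ n0; rewrite -/D in Dge.
have D0 : 0 < D.
  case: (posnP D) Dge => [->|//]; rewrite mul0n; nia.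
split.
  rewrite /D /ceil_div ltn_divLR //. nia.
move=> A HA.
have HA' : forall i, exists b, b < D /\ A i = DAP p D b.
  by move=> i; case: (HA i) => b h1 h2; exists b.
have [b Hb] := fin_all_exists HA'.
pose M := \sum_(i < k) (p - 1 - b i) %/ D.
pose B := \sum_(i < k) b i.
have p0 : 0 < p by lia.
pose g (j : 'I_M.+1) : 'I_p := Ordinal (ltn_pmod (B + j * D) p0).
have sub : sumset A \subset [set g j | j in 'I_M.+1].
  apply/subsetP => x; rewrite inE => /existsP [a /andP [/forallP Ha /eqP Hx]].
  have Hj : forall i, exists j : 'I_p, (j <= (p - 1 - b i) %/ D) && (val (a i) == b i + j * D).
    move=> i; have := Ha i; rewrite (proj2 (Hb i)) inE => /existsP //.
  have [j Hj'] := fin_all_exists Hj.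
  have sj : \sum_(i < k) (j i : nat) < M.+1.
    rewrite ltnS; apply: leq_sum => i _; by case/andP: (Hj' i).
  apply/imsetP; exists (Ordinal sj) => //.
  apply: val_inj => /=; rewrite Hx.
  have -> : \sum_(i < k) val (a i) = \sum_(i < k) (b i + j i * D).
    by apply: eq_bigr => i _; case/andP: (Hj' i) => _ /eqP.
  by rewrite big_split /= -big_distrl.
have cM : #|sumset A| <= M.+1.
  apply: (leq_trans (subset_leq_card sub)).
  by apply: (leq_trans (leq_imset_card _ _)); rewrite card_ord.
pose q := (p - 1) %/ D.
have Mq : M <= k * q.
  have : M <= \sum_(i < k) q by apply: leq_sum => i _; apply: leq_div2r; lia.
  by rewrite sum_nat_const card_ord.
have qD : q * D <= p - 1 by rewrite /q leq_trunc_div.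
have : 2 * k * p * q <= (p - 1) * (p - 3) by nia.
move=> H; nia.
Qed.
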